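(* For every $k\in\mathbb{Z}$, \[ [\alpha_{k+1}^\vee]_q\,\tau_k\,s_ks_{k+1}(\tau_{k+1})+[\alpha_k^\vee]_q\,s_{k+1}s_k(\tau_k)\,\tau_{k+1}=[\alpha_k^\vee+\alpha_{k+1}^\vee]_q\,s_k(\tau_k)\,s_{k+1}(\tau_{k+1}) \] holds in $D(\mathcal{A})$, where $w(\cdot)$ denotes the quantum birational Weyl group action.
   Context: $q$-difference case of type $A^{(1)}_{n-1}$, $n\ge3$: $I=\mathbb{Z}/n\mathbb{Z}$, $a_{ii}=2$, $a_{i,i\pm1}=-1$, $a_{ij}=0$ otherwise, $d_i=1$. $U_-$ is the $\mathbb{C}(q)$-algebra generated by $f_i$ ($i\in I$) with $q$-Serre relations $\sum_{k=0}^{1-a_{ij}}(-1)^kf_i^{(1-a_{ij}-k)}f_jf_i^{(k)}=0$ ($i\ne j$), $f_i^{(k)}=f_i^k/[k]_q!$, $[a]_q=(q^a-q^{-a})/(q-q^{-1})$. $A$ is a quotient of $U_-$ which is an integral domain with images $f_i\ne0$, and $f_i\mapsto f_{i+1}$ defines an algebra automorphism of $A$. $\tilde A=A[f_i^{-1}\mid i\in I]$ is the Ore localization at the multiplicative set generated by the $f_i$. $Q^\vee$ is the free $\mathbb{Z}$-module with basis $\delta^\vee,\epsilon_1^\vee,\dots,\epsilon_n^\vee$; set $\epsilon^\vee_{k+n}=\epsilon^\vee_k-\delta^\vee$ for all $k\in\mathbb{Z}$ and $\alpha_k^\vee=\epsilon_k^\vee-\epsilon_{k+1}^\vee$ (so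 $\alpha^\vee_{k+n}=\alpha^\vee_k$). $P=\mathrm{Hom}(Q^\vee,\mathbb{Z})$ with dual basis $\Lambda_0,\epsilon_1,\dots,\epsilon_n$; $\epsilon_{k+n}=\epsilon_k$; $\varpi_k=\epsilon_1+\dots+\epsilon_k$ for $k\ge0$, extended by $\varpi_{k+n}=\varpi_k+\varpi_n$ for all $k\in\mathbb{Z}$; $\Lambda_k=\Lambda_0+\varpi_k$; $\alpha_k=\epsilon_k-\epsilon_{k+1}$. For $k\in\mathbb{Z}$ write $s_k=s_{\bar k}$, $f_k=f_{\bar k}$, $\alpha_{\bar k}=\alpha_k$, $\alpha^\vee_{\bar k}=\alpha^\vee_k$. The Weyl group $W$ (generated by $s_i$, $i\in I$) acts on $Q^\vee,P$ by $s_i(\beta)=\beta-\langle\beta,\alpha_i\rangle\alpha_i^\vee$, $s_i(\lambda)=\lambda-\langle\alpha_i^\vee,\lambda\rangle\alpha_i$. $\tilde A^{\mathrm{pa}}=\tilde A[q^\beta\mid\beta\in Q^\vee]$ with $q^\beta$ central, $q^\beta q^\gamma=q^{\beta+\gamma}$; $[\beta]_q:=(q^\beta-q^{-\beta})/(q-q^{-1})$ for $\beta\in Q^\vee$. For $\lambda\in P$, $\phi_\lambda$ substitutes $q^\beta\mapsto q^{\langle\beta,\lambda\rangle}$, and $(\phi_\lambda)_\lambda$ identifies $\tilde A^{\mathrm{pa}}$ with a subalgebra of $\tilde A^P$. For an algebra $R$, $D(R^P)$ is generated by $R^P$ and invertible $\tau^\mu$ ($\mu\in P$) with $\tau^\lambda\tau^\mu=\tau^{\lambda+\mu}$,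 $\tau^\mu a=t_\mu(a)\tau^\mu$, $t_\mu((a_\lambda)_\lambda)=(a_{\lambda+\mu})_\lambda$. Fractional powers $f_i^\beta=(f_i^{\langle\beta,\lambda\rangle})_\lambda$. $\mathcal{A}\subset\tilde A^P$ is generated by $\tilde A^{\mathrm{pa}}$ and all $f_i^\beta$; $D(\mathcal{A})$ by $\mathcal{A}$ and all $\tau^\mu$. Tilde action: $\tilde w((a_\lambda)_\lambda)=(a_{w^{-1}(\lambda)})_\lambda$, $\tilde w(\tau^\mu)=\tau^{w(\mu)}$. The quantum birational Weyl group action of $W$ on $D(\mathcal{A})$ is $s_i(x)=f_i^{\alpha_i^\vee}\tilde s_i(x)f_i^{-\alpha_i^\vee}$. The $\tau$-variables are $\tau_k=\tau^{\Lambda_k}$ for $k\in\mathbb{Z}$. *)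

(* Defs.v *)
From HB Require Import structures.
From mathcomp Require Import all_boot all_algebra.
From mathcomp Require Import complex fraction Rstruct.
Import GRing.Theory.
Local Open Scope ring_scope.

Definition Cfield : numClosedFieldType := (Rdefinitions.R)[i].
Definition Cq : fieldType := {fraction {poly Cfield}}.
Definition qq : Cq := FracField.tofrac ('X : {poly Cfield}).

Definition qint (m : int) : Cq := (qq ^ m - qq ^ (- m)) / (qq - qq^-1).
Definition qfact (k : nat) : Cq := \prod_(1 <= j < k.+1) qint j%:Z.

(* Cartan matrix of type A^{(1)}_{n-1}, indices I = Z/nZ represented   *)
(* by integers (all data below are n-periodic in the indices).         *)
Definition cartan (n : nat) (i j : int) : int :=
  if ((i - j) %% n)%Z == 0 then 2
  else if (((i - j - 1) %% n)%Z == 0) || (((i - j + 1) %% n)%Z == 0) then -1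
  else 0.

Definition dpow {A : algType Cq} (x : A) (k : nat) : A := (qfact k)^-1 *: x ^+ k.

Definition serre_rel {A : algType Cq} (n : nat) (f : int -> A) (i j : int) : Prop :=
  let d := absz (1 - cartan n i j) in
  \sum_(0 <= k < d.+1) ((-1) ^+ k : Cq) *: (dpow (f i) (d - k) * f j * dpow (f i) k) = 0.

Definition generates {A : algType Cq} (f : int -> A) : Prop :=
  forall S : A -> Prop,
    (forall c : Cq, S c%:A) ->
    (forall x y, S x -> S y -> S (x + y)) ->
    (forall x y, S x -> S y -> S (x * y)) ->
    (forall i, S (f i)) ->
    forall x, S x.

(* Lattices.  P = Hom(Q^vee, Z) is represented by 'rV[int]_(n.+1):     *)
(* coordinate 0 = coefficient of Lambda_0, coordinate j (1<=j<=n) =    *)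
(* coefficient of eps_j.  Q^vee is represented likewise, coordinate 0  *)
(* = coefficient of delta^vee, coordinate j = coefficient of eps^vee_j.*)
(* Since (Lambda_0, eps_1..eps_n) is the dual basis, the pairing is    *)
(* the dot product of coordinates.                                     *)
Definition Pw (n : nat) := 'rV[int]_(n.+1).
Definition Qc (n : nat) := 'rV[int]_(n.+1).

Definition pairing (n : nat) (b : Qc n) (l : Pw n) : int :=
  \sum_(i < n.+1) b 0 i * l 0 i.

Definition Lam0 (n : nat) : Pw n := delta_mx 0 0.
Definition eps (n : nat) (k : int) : Pw n :=
  delta_mx 0 (@inord n (absz ((k - 1) %% n)%Z).+1).
Definition deltav (n : nat) : Qc n := delta_mx 0 0.
(* eps^vee_k, k in Z, with eps^vee_{k+n} = eps^vee_k - delta^vee *)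
Definition epsv (n : nat) (k : int) : Qc n :=
  delta_mx 0 (@inord n (absz ((k - 1) %% n)%Z).+1) - ((k - 1) %/ n)%Z *: deltav n.

(* varpi_m = eps_1 + ... + eps_m (m >= 0); varpi_{k+n} = varpi_k + varpi_n *)
Definition varpi_nat (n : nat) (m : nat) : Pw n := \sum_(1 <= j < m.+1) eps n j%:Z.
Definition varpi (n : nat) (k : int) : Pw n :=
  varpi_nat n (absz (k %% n)%Z) + (k %/ n)%Z *: varpi_nat n n.
Definition Lam (n : nat) (k : int) : Pw n := Lam0 n + varpi n k.

Definition alpha (n : nat) (k : int) : Pw n := eps n k - eps n (k + 1).
Definition alphav (n : nat) (k : int) : Qc n := epsv n k - epsv n (k + 1).

Definition sP (n : nat) (k : int) (l : Pw n) : Pw n :=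
  l - pairing n (alphav n k) l *: alpha n k.

(* D(R^P): the algebra generated by R^P and tau^mu (mu in P) with      *)
(* tau^mu a = t_mu(a) tau^mu.  An element is a finite sum of monomials *)
(* a tau^mu, represented by a list of pairs (a, mu); two lists denote  *)
(* the same element iff their coefficients at every tau^nu agree.      *)
Section Diff.
Variables (n : nat) (R : pzRingType).

Definition fam := Pw n -> R.
Definition Dop := seq (fam * Pw n)%type.

Definition tshift (mu : Pw n) (a : fam) : fam := fun l => a (l + mu).

Definition dcoef (x : Dop) (nu : Pw n) : fam :=
  fun l => \sum_(m <- x | m.2 == nu) m.1 l.

Definition deq (x y : Dop) : Prop := forall nu l, dcoef x nu l = dcoef y nu l.

Definition dadd (x y : Dop) : Dop := x ++ y.
(* (a tau^mu)(b tau^nu) = a t_mu(b) tau^(mu+nu) *)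
Definition dmul (x y : Dop) : Dop :=
  [seq ((fun l => m.1 l * tshift m.2 p.1 l), m.2 + p.2) | m <- x, p <- y].
Definition dfam (a : fam) : Dop := [:: (a, 0)].
Definition dtau (mu : Pw n) : Dop := [:: ((fun _ => 1), mu)].

Definition dtilde (w winv : Pw n -> Pw n) (x : Dop) : Dop :=
  [seq ((fun l => m.1 (winv l)), w m.2) | m <- x].
End Diff.
Arguments tshift {n R}.
Arguments dcoef {n R}.
Arguments deq {n R}.
Arguments dadd {n R}.
Arguments dmul {n R}.
Arguments dfam {n R}.
Arguments dtau {n} R.
Arguments dtilde {n R}.

Definition fpow {n : nat} {R : unitRingType} (x : R) (b : Qc n) : fam n R :=
  fun l => x ^ pairing n b l.

(* quantum birational action of s_k: x |-> f_k^{alpha_k^vee} s~_k(x) f_k^{-alpha_k^vee}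
   (s_k is an involution, so s_k^{-1} = s_k in the tilde action) *)
Definition sq {n : nat} {R : unitRingType} (F : int -> R) (k : int) (x : Dop n R) : Dop n R :=
  dmul (dmul (dfam (fpow (F k) (alphav n k))) (dtilde (sP n k) (sP n k) x))
       (dfam (fpow (F k) (- alphav n k))).

Definition dq {n : nat} (R : algType Cq) (b : Qc n) : Dop n R :=
  dfam (fun l : Pw n => (qint (pairing n b l))%:A).

Definition tauk (n : nat) (R : pzRingType) (k : int) : Dop n R := dtau R (Lam n k).

(* Main.v *)
Require Import Defs.
From HB Require Import structures.
From mathcomp Require Import all_boot all_algebra.
From mathcomp Require Import complex fraction Rstruct.
From mathcomp Require Import ring zify.
Import GRing.Theory.
Local Open Scope ring_scope.

Section Gen.
Variables (K : fieldType) (x : K).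
Hypothesis x0 : x != 0.
Hypothesis D0 : x - x^-1 != 0.
Lemma D1 : x * x - 1 != 0.
Proof.
have -> : x * x - 1 = x * (x - x^-1) by rewrite mulrBr mulfV // -expr2.
by rewrite mulf_neq0.
Qed.
Let qi (m : int) : K := (x ^ m - x ^ (- m)) / (x - x^-1).

Lemma qiE m : qi m = (x ^ m - (x ^ m)^-1) / (x - x^-1).
Proof. by rewrite /qi invr_expz. Qed.

Lemma gD2 : x ^+ 2 - 1 = x * (x - x^-1).
Proof. by field. Qed.
Lemma gP2 : x ^+ 2 + 1 = x * (x + x^-1).
Proof. by field. Qed.

Lemma g0 : qi 0 = 0.
Proof. by rewrite /qi (_ : (- (0:int)) = 0) // subrr mul0r. Qed.
Lemma g1 : qi 1 = 1.
Proof. rewrite qiE expr1z; exact: divff D0. Qed.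
Lemma gN1 : qi (-1) = -1.
Proof. rewrite qiE exprN1 invrK. by field; rewrite x0 D1. Qed.
Lemma g2 : qi 2 = x + x^-1.
Proof. rewrite qiE (_ : x ^ 2 = x * x) //. by field; rewrite x0 D1. Qed.
Lemma grec m : qi (m + 2) = qi 2 * qi (m + 1) - qi m.
Proof.
rewrite !qiE (expfzDr m 2 x0) (expfzDr m 1 x0) (_ : x ^ 2 = x * x) // expr1z.
have h3 := expfz_neq0 m x0. by field; rewrite x0 D1 h3.
Qed.
Lemma gadd m p : qi p * qi (m + 1) - qi m * qi (p - 1) = qi (m + p).
Proof.
rewrite !qiE (expfzDr m 1 x0) (expfzDr p (-1) x0) (expfzDr m p x0) expr1z exprN1.
have h3 := expfz_neq0 m x0; have h4 := expfz_neq0 p x0. by field; rewrite x0 D1 h3 h4.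
Qed.
End Gen.

Lemma qq_neq0 : qq != 0.
Proof. by rewrite /qq tofrac_eq0 polyX_eq0. Qed.

Lemma X2coef (c : Cfield) : ('X^2 + c%:P : {poly Cfield}) != 0.
Proof.
apply/eqP => /(congr1 (fun p : {poly Cfield} => p`_2)).
rewrite coefD coefXn coefC /= coef0 addr0 => /eqP; by rewrite oner_eq0.
Qed.

Lemma qq2_neq1 : qq ^+ 2 - 1 != 0.
Proof.
rewrite /qq -tofracXn -tofrac1 -tofracB tofrac_eq0.
by rewrite -polyCN X2coef.
Qed.

Lemma qq2_neqm1 : qq ^+ 2 + 1 != 0.
Proof.
rewrite /qq -tofracXn -tofrac1 -tofracD tofrac_eq0.
by rewrite -polyC1 X2coef.
Qed.

Lemma Dq_neq0 : qq - qq^-1 != 0.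
Proof.
apply/eqP => E; move/eqP: qq2_neq1; apply.
by rewrite (@gD2 _ qq qq_neq0) E mulr0.
Qed.

Lemma qint0 : qint 0 = 0.
Proof. exact: (@g0 _ qq). Qed.
Lemma qint1 : qint 1 = 1.
Proof. exact: (@g1 _ qq Dq_neq0). Qed.
Lemma qintN1 : qint (-1) = -1.
Proof. exact: (@gN1 _ qq qq_neq0 Dq_neq0). Qed.
Lemma qint2 : qint 2 = qq + qq^-1.
Proof. exact: (@g2 _ qq qq_neq0 Dq_neq0). Qed.
Lemma qint_rec m : qint (m + 2) = qint 2 * qint (m + 1) - qint m.
Proof. exact: (@grec _ qq qq_neq0 Dq_neq0). Qed.
Lemma qint_add m p : qint p * qint (m + 1) - qint m * qint (p - 1) = qint (m + p).
Proof. exact: (@gadd _ qq qq_neq0 Dq_neq0). Qed.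
Lemma qint2_neq0 : qint 2 != 0.
Proof.
rewrite qint2; apply/eqP => E; move/eqP: qq2_neqm1; apply.
by rewrite (@gP2 _ qq qq_neq0) E mulr0.
Qed.
Lemma abcd (V : zmodType) (A B C D : V) : (A - B) - (C - D) = (A - C) - (B - D).
Proof. rewrite !opprB addrACA [RHS]addrACA; congr (_ + _); exact: addrC. Qed.

Lemma lin2 (R : comPzRingType) (V : lmodType R) (g a1 b1 a2 b2 : R) (u v : V) :
  g *: (a1 *: u - b1 *: v) - (a2 *: u - b2 *: v) = (g * a1 - a2) *: u - (g * b1 - b2) *: v.
Proof. by rewrite scalerBr !scalerA !scalerBl abcd. Qed.

Lemma linF (R : comPzRingType) (V : lmodType R) (p m x1 y1 x2 y2 : R) (u v : V) :
  p *: (x1 *: u - y1 *: v) + m *: (x2 *: v - y2 *: u) = (p * x1 - m * y2) *: u + (m * x2 - p * y1) *: v.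
Proof.
rewrite !scalerBr !scalerA !scalerBl addrACA [RHS]addrACA; congr (_ + _). exact: addrC.
Qed.

Lemma qrec2 x y z : y = x + 1 -> z = x + 2 -> qint z = qint 2 * qint y - qint x.
Proof. by move=> -> ->; exact: qint_rec. Qed.

Lemma qrec_dn x y z : y = x + 1 -> z = x + 2 -> qint x = qint 2 * qint y - qint z.
Proof. by move=> -> ->; rewrite qint_rec opprB addrC subrK. Qed.

Section NC.
Variables (At : unitAlgType Cq) (a b : At).
Hypothesis ua : a \is a GRing.unit.
Hypothesis S : a * a * b - qint 2 *: (a * b * a) + b * a * a = 0.

Definition cj (m : int) (x : At) := a ^ m * x * a ^ (- m).

Lemma cjD m n x : cj (m + n) x = cj m (cj n x).
Proof.
rewrite /cj (exprzDr ua) opprD addrC (exprzDr ua) !mulrA //.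
Qed.

Lemma cjB m x y : cj m (x - y) = cj m x - cj m y.
Proof. by rewrite /cj mulrBr mulrBl. Qed.
Lemma cjDr m x y : cj m (x + y) = cj m x + cj m y.
Proof. by rewrite /cj mulrDr mulrDl. Qed.
Lemma cjZ m c x : cj m (c *: x) = c *: cj m x.
Proof. by rewrite /cj -scalerAr -scalerAl. Qed.
Lemma cj0 m : cj m 0 = 0.
Proof. by rewrite /cj mulr0 mul0r. Qed.

Lemma S' : cj 1 (cj 1 b) - qint 2 *: cj 1 b + b = 0.
Proof.
have := congr1 (fun y => y * a^-1 * a^-1) S; rewrite /= !mul0r.
rewrite !(mulrDl, mulNr) -!scalerAl !(mulrK ua) => <-.
by rewrite /cj expr1z exprN1 !mulrA.
Qed.

Lemma recS m : cj (m + 2) b - qint 2 *: cj (m + 1) b + cj m b = 0.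
Proof.
have := congr1 (cj m) S'; rewrite cj0 cjDr cjB cjZ -!cjD => <-.
by congr (cj _ _ - _ + _); rewrite -addrA.
Qed.

Definition T m := cj m b = qint m *: cj 1 b - qint (m - 1) *: b.

Lemma T0 : T 0.
Proof.
rewrite /T qint0 scale0r sub0r.
have -> : qint (0 - 1) = -1 by exact: qintN1.
rewrite scaleN1r opprK.
rewrite /cj; have -> : a ^ (- 0) = 1 by []. by rewrite ?expr0z mul1r mulr1.
Qed.

Lemma T1 : T 1.
Proof. by rewrite /T qint1 scale1r subrr qint0 scale0r subr0. Qed.

Lemma Tup m : T m -> T (m + 1) -> T (m + 2).
Proof.
rewrite /T => h0 h1.
have -> : cj (m + 2) b = qint 2 *: cj (m + 1) b - cj m b.
  by apply/eqP; rewrite -subr_eq0 opprB addrA addrAC; apply/eqP; exact: recS.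
rewrite h0 h1 lin2; congr (_ *: _ - _ *: _).
  by symmetry; apply: qrec2; lia.
by symmetry; apply: (qrec2 (m - 1)); lia.
Qed.

Lemma Tdn m : T (m + 1) -> T (m + 2) -> T m.
Proof.
rewrite /T => h1 h2.
have -> : cj m b = qint 2 *: cj (m + 1) b - cj (m + 2) b.
  by apply/eqP; rewrite -subr_eq0 opprB addrC; apply/eqP; exact: recS.
rewrite h1 h2 lin2; congr (_ *: _ - _ *: _).
  by symmetry; apply: qrec_dn; lia.
by symmetry; apply: (qrec_dn (m - 1)); lia.
Qed.

Lemma Tall m : T m.
Proof.
have up : forall N : nat, T N%:Z /\ T (N%:Z + 1).
  elim=> [|N [h0 h1]]; first by split; [exact: T0 | exact: T1].
  have e1 : (N.+1 : int) = N%:Z + 1 by lia.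
  have e2 : (N.+1 : int) + 1 = N%:Z + 2 by lia.
  by rewrite e2 e1; split => //; apply: Tup.
have dn : forall N : nat, T (- N%:Z) /\ T (- N%:Z + 1).
  elim=> [|N [h0 h1]]; first by split; [exact: T0 | exact: T1].
  have e1 : - (N.+1%:Z) + 1 = - N%:Z by lia.
  have e2 : - N%:Z = (- (N.+1%:Z)) + 1 by lia.
  have e3 : - N%:Z + 1 = (- (N.+1%:Z)) + 2 by lia.
  rewrite e1; split => //; apply: Tdn; by rewrite -?e2 -?e3.
case: m => N; first by case: (up N).
by rewrite NegzE; case: (dn N.+1).
Qed.

End NC.

Lemma cj_shift (At : unitAlgType Cq) (a b : At) (ua : a \is a GRing.unit) m :
  a ^ (m + 1) * b * a ^ (- m) = @cj _ a (m + 1) b * a.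
Proof.
have e : - m = - (m + 1) + 1 by lia.
by rewrite /cj e (exprzDr ua (- (m + 1)) 1) expr1z !mulrA.
Qed.

Lemma cj_shift2 (At : unitAlgType Cq) (a b : At) (ua : a \is a GRing.unit) m :
  a ^ m * b * a ^ (1 - m) = @cj _ a m b * a.
Proof.
have e : 1 - m = - m + 1 by lia.
by rewrite /cj e (exprzDr ua (- m) 1) expr1z !mulrA.
Qed.

Lemma cjT (At : unitAlgType Cq) (a b : At) (ua : a \is a GRing.unit)
  (S : a * a * b - qint 2 *: (a * b * a) + b * a * a = 0) m :
  @cj _ a m b * a = qint m *: (a * b) - qint (m - 1) *: (b * a).
Proof.
rewrite (@Tall _ a b ua S m) mulrBl -!scalerAl; congr (_ *: _ - _).
by rewrite /cj expr1z exprN1 divrK.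
Qed.

Lemma final (At : unitAlgType Cq) (a b : At) (ua : a \is a GRing.unit) (ub : b \is a GRing.unit)
  (Sab : a * a * b - qint 2 *: (a * b * a) + b * a * a = 0)
  (Sba : b * b * a - qint 2 *: (b * a * b) + a * b * b = 0) m p :
  qint p *: (a ^ (m + 1) * b * a ^ (- m)) + qint m *: (b ^ p * a * b ^ (1 - p))
  = qint (m + p) *: (a * b).
Proof.
rewrite (@cj_shift _ a b ua) (@cj_shift2 _ b a ub) (@cjT _ a b ua Sab) (@cjT _ b a ub Sba).
have -> : m + 1 - 1 = m by lia.
rewrite linF qint_add [qint m * qint p]mulrC subrr scale0r addr0.
by rewrite addrC.
Qed.
Section Lat.
Variable n : nat.
Hypothesis hn : (3 <= n)%N.

Lemma pairingDr b l1 l2 : pairing n b (l1 + l2) = pairing n b l1 + pairing n b l2.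
Proof. by rewrite /pairing -big_split; apply: eq_bigr => i _; rewrite mxE mulrDr. Qed.
Lemma pairingNr b l : pairing n b (- l) = - pairing n b l.
Proof. by rewrite /pairing -sumrN; apply: eq_bigr => i _; rewrite mxE mulrN. Qed.
Lemma pairingBr b l1 l2 : pairing n b (l1 - l2) = pairing n b l1 - pairing n b l2.
Proof. by rewrite pairingDr pairingNr. Qed.
Lemma pairingZr b c l : pairing n b (c *: l) = c * pairing n b l.
Proof. by rewrite /pairing mulr_sumr; apply: eq_bigr => i _; rewrite mxE mulrCA. Qed.
Lemma pairing0r b : pairing n b 0 = 0.
Proof. by rewrite /pairing big1 // => i _; rewrite mxE mulr0. Qed.
Lemma pairingDl b1 b2 l : pairing n (b1 + b2) l = pairing n b1 l + pairing n b2 l.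
Proof. by rewrite /pairing -big_split; apply: eq_bigr => i _; rewrite mxE mulrDl. Qed.
Lemma pairingNl b l : pairing n (- b) l = - pairing n b l.
Proof. by rewrite /pairing -sumrN; apply: eq_bigr => i _; rewrite mxE mulNr. Qed.
Lemma pairingBl b1 b2 l : pairing n (b1 - b2) l = pairing n b1 l - pairing n b2 l.
Proof. by rewrite pairingDl pairingNl. Qed.
Lemma pairingZl b c l : pairing n (c *: b) l = c * pairing n b l.
Proof. by rewrite /pairing mulr_sumr; apply: eq_bigr => i _; rewrite mxE mulrA. Qed.
Lemma pairing_dr b i : pairing n b (delta_mx 0 i) = b 0 i.
Proof.
rewrite /pairing (bigD1 i) //= big1 ?addr0; first by rewrite mxE !eqxx mulr1.
by move=> j /negbTE ji; rewrite mxE eqxx /= ?ji ?(eq_sym i) ?ji mulr0.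
Qed.
Lemma pairing_sum b (r : seq nat) (F : nat -> Pw n) :
  pairing n b (\sum_(i <- r) F i) = \sum_(i <- r) pairing n b (F i).
Proof.
elim: r => [|x r IH]; first by rewrite !big_nil pairing0r.
by rewrite !big_cons pairingDr IH.
Qed.
Lemma pairing_sP b j l :
  pairing n b (sP n j l) = pairing n b l - pairing n (alphav n j) l * pairing n b (alpha n j).
Proof. by rewrite /sP pairingBr pairingZr. Qed.

Lemma npos : (0 < n%:Z)%R.
Proof. lia. Qed.

Lemma chrz x q r : (0 <= r)%R -> (r < n%:Z)%R -> x = q * n%:Z + r -> (x %/ n)%Z = q /\ (x %% n)%Z = r.
Proof.
move=> h1 h2 ->.
have h : ((q * n%:Z + r) %/ n)%Z = q.
  rewrite divzMDl; last by rewrite -lt0n; lia.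
  rewrite divz_small ?addr0 //; apply/andP; split => //; lia.
split => //; rewrite /modz h; lia.
Qed.

Lemma modbnd x : (0 <= (x %% n)%Z)%R /\ ((x %% n)%Z < n%:Z)%R.
Proof.
split; first by apply: modz_ge0; lia.
by apply: ltz_pmod; lia.
Qed.

Lemma Zx x : (- n%:Z < x)%R -> (x < n%:Z)%R -> (((x %% n)%Z == 0) = (x == 0)).
Proof.
move=> h1 h2; case: (boolP (0 <= x)%R) => hx.
  by have [_ ->] := @chrz x 0 x hx h2 ltac:(lia).
have h3 : (0 <= x + n%:Z)%R by lia.
have h4 : (x + n%:Z < n%:Z)%R by lia.
have [_ ->] := @chrz x (-1) _ h3 h4 ltac:(lia).
by apply/eqP/eqP; lia.
Qed.

Lemma divsmall x : (0 <= x)%R -> (x < n%:Z)%R -> (x %/ n)%Z = 0.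
Proof. by move=> h1 h2; have [-> _] := @chrz x 0 x h1 h2 ltac:(lia). Qed.

Lemma divneg x : (- n%:Z <= x)%R -> (x < 0)%R -> (x %/ n)%Z = -1.
Proof.
move=> h1 h2; have h3 : (0 <= x + n%:Z)%R by lia.
have h4 : (x + n%:Z < n%:Z)%R by lia.
by have [-> _] := @chrz x (-1) _ h3 h4 ltac:(lia).
Qed.

Definition idx (k : int) : 'I_n.+1 := @inord n (absz ((k - 1) %% n)%Z).+1.

Lemma idx_val k : nat_of_ord (idx k) = (absz ((k - 1) %% n)%Z).+1.
Proof. rewrite /idx inordK //; lia. Qed.

Lemma idx_neq0 k : (idx k == 0 :> 'I_n.+1) = false.
Proof. by apply/negbTE; apply/eqP => /(congr1 (@nat_of_ord _)); rewrite idx_val. Qed.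


Lemma idx_eq j i : (idx j == idx i) = ((j - i) %% n == 0)%Z.
Proof.
have E1 := divz_eq (j - 1) n; have E2 := divz_eq (i - 1) n.
have [B1 B1'] := modbnd (j - 1); have [B2 B2'] := modbnd (i - 1).
apply/eqP/eqP => h.
  have := congr1 (@nat_of_ord _) h; rewrite !idx_val => h'.
  have [_ ->] := @chrz (j - i) (((j - 1) %/ n)%Z - ((i - 1) %/ n)%Z) 0 ltac:(lia) npos ltac:(lia).
  by [].
have E3 := divz_eq (j - i) n.
have [_ h2] := @chrz (j - 1) (((i - 1) %/ n)%Z + ((j - i) %/ n)%Z) ((i - 1) %% n)%Z B2 B2' ltac:(lia).
apply: ord_inj; rewrite !idx_val h2 //.
Qed.

Definition Zf (x : int) : int := if ((x %% n)%Z == 0) then 1 else 0.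

Lemma eps_pair j i : pairing n (epsv n j) (eps n i) = Zf (j - i).
Proof.
rewrite /epsv /eps pairingBl pairingZl /deltav pairing_dr pairing_dr !mxE.
rewrite !eqxx /= eq_sym idx_neq0 idx_eq mulr0 subr0 /Zf.
by case: ifP.
Qed.

Lemma lam0_pair j : pairing n (epsv n j) (Lam0 n) = - ((j - 1) %/ n)%Z.
Proof.
rewrite /Lam0 pairing_dr /epsv /deltav !mxE !eqxx /= ?idx_neq0 ?(eq_sym _ (idx j)) ?idx_neq0 mulr1 sub0r //.
Qed.

Lemma pv_nat j m : (m <= n)%N ->
  pairing n (epsv n j) (varpi_nat n m) = if (((j - 1) %% n)%Z < m%:Z)%R then 1 else 0.
Proof.
have E1 := divz_eq (j - 1) n.
have [B1 B1'] := modbnd (j - 1).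
elim: m => [|m IH] hm.
  rewrite /varpi_nat big_geq // pairing0r; case: ifP => //; lia.
rewrite /varpi_nat big_nat_recr //= pairingDr.
rewrite /varpi_nat in IH; rewrite IH; last by lia.
rewrite eps_pair /Zf.
have -> : j - m.+1%:Z = ((j - 1) %/ n)%Z * n%:Z + (((j - 1) %% n)%Z - m%:Z) by lia.
rewrite modzMDl Zx; [|lia|lia].
case: ifP => h1; case: ifP => h2; case: ifP => h3 //; lia.
Qed.

Lemma lam_pair j k : pairing n (epsv n j) (Lam n k) = ((k - j) %/ n)%Z + 1.
Proof.
rewrite /Lam /varpi pairingDr pairingDr pairingZr lam0_pair !pv_nat //; last first.
  have [B1 B1'] := modbnd k; lia.
have E1 := divz_eq (j - 1) n; have [B1 B1'] := modbnd (j - 1).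
have E2 := divz_eq k n; have [B2 B2'] := modbnd k.
have -> : (((j - 1) %% n)%Z < n%:Z)%R = true by [].
case: ifP => h.
  have [-> _] := @chrz (k - j) ((k %/ n)%Z - ((j - 1) %/ n)%Z) ((k %% n)%Z - ((j - 1) %% n)%Z - 1)
    ltac:(lia) ltac:(lia) ltac:(lia).
  lia.
have [-> _] := @chrz (k - j) ((k %/ n)%Z - ((j - 1) %/ n)%Z - 1) (n%:Z + (k %% n)%Z - ((j - 1) %% n)%Z - 1)
    ltac:(lia) ltac:(lia) ltac:(lia).
lia.
Qed.

Lemma alam_pair j k : pairing n (alphav n j) (Lam n k) = ((k - j) %/ n)%Z - ((k - (j + 1)) %/ n)%Z.
Proof. rewrite /alphav pairingBl !lam_pair; lia. Qed.

Lemma aa_pair j i : pairing n (alphav n j) (alpha n i) =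
  Zf (j - i) - Zf (j - (i + 1)) - Zf (j + 1 - i) + Zf (j + 1 - (i + 1)).
Proof. rewrite /alphav /alpha (pairingBl (epsv n j)) !(pairingBr (epsv n _) (eps n _)) !eps_pair; lia. Qed.

Lemma Zfx x : (- n%:Z < x)%R -> (x < n%:Z)%R -> Zf x = if x == 0 then 1 else 0.
Proof. by move=> h1 h2; rewrite /Zf Zx. Qed.

Variable k : int.

Lemma P1 : pairing n (alphav n k) (Lam n k) = 1.
Proof. rewrite alam_pair (divsmall (k - k)) ?(divneg (k - (k + 1))); lia. Qed.
Lemma P2 : pairing n (alphav n (k + 1)) (Lam n k) = 0.
Proof. rewrite alam_pair (divneg (k - (k + 1))) ?(divneg (k - (k + 1 + 1))); lia. Qed.
Lemma P3 : pairing n (alphav n k) (Lam n (k + 1)) = 0.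
Proof. rewrite alam_pair (divsmall (k + 1 - k)) ?(divsmall (k + 1 - (k + 1))); lia. Qed.
Lemma P4 : pairing n (alphav n (k + 1)) (Lam n (k + 1)) = 1.
Proof. rewrite alam_pair (divsmall (k + 1 - (k + 1))) ?(divneg (k + 1 - (k + 1 + 1))); lia. Qed.

Ltac zfs := rewrite !Zfx; try lia; repeat case: eqP; lia.

Lemma P5 : pairing n (alphav n k) (alpha n k) = 2.
Proof. rewrite aa_pair. zfs. Qed.
Lemma P6 : pairing n (alphav n k) (alpha n (k + 1)) = -1.
Proof. rewrite aa_pair. zfs. Qed.
Lemma P7 : pairing n (alphav n (k + 1)) (alpha n k) = -1.
Proof. rewrite aa_pair. zfs. Qed.
Lemma P8 : pairing n (alphav n (k + 1)) (alpha n (k + 1)) = 2.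
Proof. rewrite aa_pair. zfs. Qed.

End Lat.
Definition sq' {n : nat} {R : unitRingType} (a : R) (av : Pw n) (s : Pw n -> Pw n) (x : Dop n R) : Dop n R :=
  dmul (dmul (dfam (fpow a av)) (dtilde s s x)) (dfam (fpow a (- av))).

Lemma finish (At : unitAlgType Cq) (a b : At) (ua : a \is a GRing.unit) (ub : b \is a GRing.unit)
  (Sab : a * a * b - qint 2 *: (a * b * a) + b * a * a = 0)
  (Sba : b * b * a - qint 2 *: (b * a * b) + a * b * b = 0) m p
  E1 E2 E3 E4 E5 E6 E7 E8 E9 E10 E11 E12 :
  E1 = m + 1 -> E2 + E3 = 1 -> E4 = - m -> E5 = p -> E6 + E7 = 1 -> E8 = 1 - p ->
  E9 + E10 = 1 -> E11 + E12 = 1 ->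
  (qint p)%:A * 1 * (a ^ E1 * (b ^ E2 * 1 * b ^ E3) * a ^ E4) +
  (qint m)%:A * (b ^ E5 * (a ^ E6 * 1 * a ^ E7) * b ^ E8) * 1 =
  (qint (m + p))%:A * (a ^ E9 * 1 * a ^ E10) * (b ^ E11 * 1 * b ^ E12).
Proof.
move=> -> h23 -> -> h67 -> h910 h1112.
rewrite !mulr1 -(exprzDr ub E2) -(exprzDr ua E6) -(exprzDr ua E9) -(exprzDr ub E11).
rewrite h23 h67 h910 h1112 !expr1z !mulr_algl -scalerAl.
exact: final.
Qed.

Lemma absmain n (At : unitAlgType Cq) (a b : At) (ua : a \is a GRing.unit) (ub : b \is a GRing.unit)
  (Sab : a * a * b - qint 2 *: (a * b * a) + b * a * a = 0)
  (Sba : b * b * a - qint 2 *: (b * a * b) + a * b * b = 0)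
  (Lk Lk1 ak ak1 avk avk1 : Pw n) (s1 s2 : Pw n -> Pw n)
  (hs1 : forall c l, pairing n c (s1 l) = pairing n c l - pairing n avk l * pairing n c ak)
  (hs2 : forall c l, pairing n c (s2 l) = pairing n c l - pairing n avk1 l * pairing n c ak1)
  (hv1 : forall l, s1 l = l - pairing n avk l *: ak)
  (hv2 : forall l, s2 l = l - pairing n avk1 l *: ak1)
  (p1 : pairing n avk Lk = 1) (p2 : pairing n avk1 Lk = 0)
  (p3 : pairing n avk Lk1 = 0) (p4 : pairing n avk1 Lk1 = 1)
  (p5 : pairing n avk ak = 2) (p6 : pairing n avk ak1 = -1)
  (p7 : pairing n avk1 ak = -1) (p8 : pairing n avk1 ak1 = 2) :
  deq (dadd (dmul (dmul (dq At avk1) (dtau At Lk)) (sq' a avk s1 (sq' b avk1 s2 (dtau At Lk1))))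
          (dmul (dmul (dq At avk) (sq' b avk1 s2 (sq' a avk s1 (dtau At Lk)))) (dtau At Lk1)))
    (dmul (dmul (dq At (avk + avk1)) (sq' a avk s1 (dtau At Lk))) (sq' b avk1 s2 (dtau At Lk1))).
Proof.
rewrite /deq /dcoef /dadd /dmul /sq' /dtilde /dq /dtau /dfam /tshift /= => nu l.
rewrite !big_cons !big_nil /=.
have e1 : s2 Lk1 = Lk1 - ak1 by rewrite hv2 p4 scale1r.
have e2 : s1 Lk = Lk - ak by rewrite hv1 p1 scale1r.
have e3 : s1 (Lk1 - ak1) = Lk1 - ak1 - ak.
  by rewrite hv1 pairingBr p3 p6 sub0r opprK scale1r.
have e4 : s2 (Lk - ak) = Lk - ak - ak1.
  by rewrite hv2 pairingBr p2 p7 sub0r opprK scale1r.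
rewrite !add0r !addr0 e1 e2 e3 e4.
have -> : Lk + (Lk1 - ak1 - ak) = Lk - ak + (Lk1 - ak1) by rewrite [RHS]addrAC -addrA.
have -> : Lk - ak - ak1 + Lk1 = Lk - ak + (Lk1 - ak1) by rewrite addrAC -addrA.
case: eqP => _ /=; last by rewrite ?addr0.
rewrite /fpow /tshift /= pairingDl !(pairingNl, pairingNr, hs1, hs2, pairingDr, pairingBr, pairing0r, p1, p2, p3, p4, p5, p6, p7, p8).
apply: finish => //; lia.
Qed.
Lemma cartan_k n (hn : (3 <= n)%N) k : cartan n k (k + 1) = -1.
Proof. rewrite /cartan !(@Zx n hn); try lia; repeat (case: eqP => ? /=); lia. Qed.
Lemma cartan_k' n (hn : (3 <= n)%N) k : cartan n (k + 1) k = -1.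
Proof. rewrite /cartan !(@Zx n hn); try lia; repeat (case: eqP => ? /=); lia. Qed.

Lemma qfact0 : qfact 0 = 1. Proof. by rewrite /qfact big_geq. Qed.
Lemma qfact1 : qfact 1 = 1. Proof. by rewrite /qfact big_nat1 qint1. Qed.
Lemma qfact2 : qfact 2 = qint 2.
Proof. by rewrite /qfact big_nat_recr //= big_nat1 qint1 mul1r. Qed.

Lemma serre2 (A : algType Cq) n (f : int -> A) i j :
  cartan n i j = -1 -> serre_rel n f i j ->
  f i * f i * f j - qint 2 *: (f i * f j * f i) + f j * f i * f i = 0.
Proof.
rewrite /serre_rel => ->.
rewrite (_ : absz (1 - (-1) : int) = 2%N) //.
rewrite !big_nat_recl // big_geq // addr0 /dpow qfact0 qfact1 qfact2 !invr1 !scale1r !expr0 !mulr1.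
rewrite (_ : (2 - 0)%N = 2%N) // (_ : (2 - 1)%N = 1%N) // expr1 sqrrN expr1n !expr1 scale1r mul1r.
rewrite -scalerAl -scalerAr scaleN1r => H.
have := congr1 (fun y => qint 2 *: y) H; rewrite /= scaler0 !scalerDr !scalerA mulfV ?qint2_neq0 // !scale1r.
by rewrite !expr2 !mulrA scalerN addrA.
Qed.
Lemma mapS (A : algType Cq) (B : unitAlgType Cq) (g : {lrmorphism A -> B}) (x y : A) (c : Cq) :
  x * x * y - c *: (x * y * x) + y * x * x = 0 -> g x * g x * g y - c *: (g x * g y * g x) + g y * g x * g x = 0.
Proof.
move=> H.
have gZ : forall (d : Cq) (z : A), g (d *: z) = d *: g z by move=> d z; exact: (linearZ_LR g).
have gM : forall z w : A, g (z * w) = g z * g w by move=> z w; exact: rmorphM.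
have gD : forall z w : A, g (z + w) = g z + g w by move=> z w; exact: rmorphD.
have gN : forall z : A, g (- z) = - g z by move=> z; exact: rmorphN.
have g0 : g 0 = 0 by exact: rmorph0.
by rewrite -!gM -gZ -gN -!gD H g0.
Qed.
Theorem mainTheorem6 (n : nat) (hn : (3 <= n)%N)
  (A : algType Cq) (f : int -> A)
  (f_per : forall i : int, f (i + n%:Z) = f i)
  (f_nz : forall i : int, f i != 0)
  (f_serre : forall i j : int, ((i - j) %% n)%Z != 0 -> serre_rel n f i j)
  (f_gen : generates f)
  (A_dom : (1 : A) != 0 /\ (forall x y : A, x * y = 0 -> x = 0 \/ y = 0))
  (sigma : {lrmorphism A -> A}) (sigma_bij : bijective sigma)
  (sigma_f : forall i : int, sigma (f i) = f (i + 1))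
  (At : unitAlgType Cq) (iota : {lrmorphism A -> At})
  (iota_inj : injective iota)
  (iota_unit : forall i : int, iota (f i) \is a GRing.unit)
  (iota_frac : forall x : At, exists (a : A) (s : seq int),
      x = iota a * (iota (\prod_(i <- s) f i))^-1)
  (k : int) :
  let F := fun i : int => iota (f i) in
  deq
    (dadd
       (dmul (dmul (dq At (alphav n (k + 1))) (tauk n At k))
             (sq F k (sq F (k + 1) (tauk n At (k + 1)))))
       (dmul (dmul (dq At (alphav n k)) (sq F (k + 1) (sq F k (tauk n At k))))
             (tauk n At (k + 1))))
    (dmul (dmul (dq At (alphav n k + alphav n (k + 1))) (sq F k (tauk n At k)))
          (sq F (k + 1) (tauk n At (k + 1)))).
Proof.
move=> F.
have iZ : forall (c : Cq) (x : A), iota (c *: x) = c *: iota x by move=> c x; exact: (linearZ_LR iota).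
have nz1 : ((k - (k + 1)) %% n)%Z != 0.
  by rewrite (@Zx n hn); try lia; apply/eqP; lia.
have nz2 : ((k + 1 - k) %% n)%Z != 0.
  by rewrite (@Zx n hn); try lia; apply/eqP; lia.
have SA := @serre2 A n f k (k + 1) (@cartan_k n hn k) (f_serre _ _ nz1).
have SB := @serre2 A n f (k + 1) k (@cartan_k' n hn k) (f_serre _ _ nz2).
have Sab : F k * F k * F (k + 1) - qint 2 *: (F k * F (k + 1) * F k) + F (k + 1) * F k * F k = 0.
  exact (@mapS A At iota _ _ _ SA).
have Sba : F (k + 1) * F (k + 1) * F k - qint 2 *: (F (k + 1) * F k * F (k + 1)) + F k * F (k + 1) * F (k + 1) = 0.
  exact (@mapS A At iota _ _ _ SB).
exact: (@absmain n At (F k) (F (k + 1)) (iota_unit k) (iota_unit (k + 1)) Sab Sba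
  (Lam n k) (Lam n (k + 1)) (alpha n k) (alpha n (k + 1)) (alphav n k) (alphav n (k + 1))
  (sP n k) (sP n (k + 1))
  (fun c l => pairing_sP n c k l) (fun c l => pairing_sP n c (k + 1) l)
  (fun l => erefl) (fun l => erefl)
  (@P1 n hn k) (@P2 n hn k) (@P3 n hn k) (@P4 n hn k) (@P5 n hn k) (@P6 n hn k) (@P7 n hn k) (@P8 n hn k)).
Qed.
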